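(* Let $G=(S,C,H)$ be a spider graph (thin with $r\ge2$, or thick with $r\ge3$) and $T$ an MDNS of $G$. Then $|\widehat T\cap H|\le\tilde\gamma_{gr}^{\times2}(G[H])$ and $|\widehat T\cap(C\cup S)|\le\tilde\gamma_{gr}^{\times2}(G[C\cup S])$.
   Context: Graphs are finite, simple, undirected; $N[v]$ closed neighborhood. A sequence of distinct vertices $(v_1,\dots,v_k)$ is a double neighborhood sequence (DNS) if for each $i$ some $w\in N[v_i]$ satisfies $|\{j<i:w\in N[v_j]\}|\le1$; an MDNS is a DNS of maximum length and $\tilde\gamma_{gr}^{\times2}$ is that length ($0$ for the graph with no vertices). $\widehat T$ is the vertex set of $T$. A spider graph $G=(S,C,H)$ of weight $r$: $V(G)$ is partitioned into $S=\{s_1,\dots,s_r\}$ (stable), $C=\{c_1,\dots,c_r\}$ (clique), $H$ (possibly empty, arbitrary edges inside), all edges between $C$ and $H$, none between $H$ and $S$; thin: $s_ic_j\in E$ iff $i=j$; thick: $s_ic_j\in E$ iff $i\neq j$. *)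

(* Defs.v *)
From mathcomp Require Import all_boot.
Set Implicit Arguments. Unset Strict Implicit. Unset Printing Implicit Defensive.

(* A finite simple graph: vertex type T : finType, adjacency e : rel T,
   assumed symmetric and irreflexive where used. *)

Section DNS.
Variables (T : finType) (e : rel T).

Definition closedN_in (A : {set T}) (v w : T) : bool :=
  (w \in A) && ((w == v) || e v w).

(* s is a double neighborhood sequence of the induced subgraph G[A]:
   distinct vertices of A, and for each position i there is w in N[s_i]
   (in G[A]) with |{j < i : w in N[s_j]}| <= 1. *)
Definition is_DNS_in (A : {set T}) (s : seq T) : bool :=
  [&& uniq s, all (fun v => v \in A) s &
   [forall i : 'I_(size s),
     [exists w : T,
       closedN_in A (tnth (in_tuple s) i) w &&
       (#|[set j : 'I_(size s) | (j < i) && closedN_in A (tnth (in_tuple s) j) w]|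
          <= 1)]]].

(* tilde-gamma_gr^{x2}(G[A]) : maximum length of a DNS of G[A]
   (0 when A is empty). Any DNS of G[A] has length <= #|A| <= #|T|. *)
Definition gr2_in (A : {set T}) : nat :=
  \max_(n < #|T|.+1 | [exists t : n.-tuple T, is_DNS_in A t]) n.

Definition is_DNS (s : seq T) : bool := is_DNS_in [set: T] s.
Definition is_MDNS (s : seq T) : Prop :=
  is_DNS s /\ forall s' : seq T, is_DNS s' -> size s' <= size s.

Definition spiderS (r : nat) (s : 'I_r -> T) : {set T} := [set s i | i : 'I_r].
Definition spiderC (r : nat) (c : 'I_r -> T) : {set T} := [set c i | i : 'I_r].
Definition spiderH (r : nat) (s c : 'I_r -> T) : {set T} :=
  ~: (spiderS s :|: spiderC c).

Definition is_spider (r : nat) (s c : 'I_r -> T) : Prop :=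
  injective s /\ injective c /\
  (forall i j, s i != c j) /\
  (forall i j, ~~ e (s i) (s j)) /\
  (forall i j, i != j -> e (c i) (c j)) /\
  (forall i h, h \in spiderH s c -> e (c i) h) /\
  (forall i h, h \in spiderH s c -> ~~ e (s i) h).

Definition thin_spider (r : nat) (s c : 'I_r -> T) : Prop :=
  is_spider s c /\ forall i j, e (s i) (c j) = (i == j).
Definition thick_spider (r : nat) (s c : 'I_r -> T) : Prop :=
  is_spider s c /\ forall i j, e (s i) (c j) = (i != j).

End DNS.

(* Main.v *)
Require Import Defs.
From mathcomp Require Import all_boot.
Set Implicit Arguments. Unset Strict Implicit. Unset Printing Implicit Defensive.

Lemma card_prefix (T : finType) (s : seq T) (x0 : T) (Q : pred T) (i : nat) :
  #|[set j : 'I_(size s) | (j < i) && Q (tnth (in_tuple s) j)]| = count Q (take i s).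
Proof.
rewrite -sum1_card -sum1_count (big_nth x0) size_take.
rewrite (eq_bigl (fun j : 'I_(size s) => (j < i) && Q (nth x0 s j))); last first.
  by move=> j; rewrite in_set (tnth_nth x0).
rewrite -(big_mkord (fun j => (j < i) && Q (nth x0 s j)) (fun _ => 1)).
have -> : (if i < size s then i else size s) = minn i (size s).
  by rewrite /minn; case: ltnP.
rewrite (big_nat_widen _ _ _ _ _ (geq_minr i (size s))).
rewrite [LHS]big_mkcond [RHS]big_mkcond.
apply: eq_big_nat => j /andP[_ jn].
rewrite /minn; case: (ltnP i (size s)) => his.
  case: (ltnP j i) => ji /=; first by rewrite nth_take // andbT.
  by rewrite andbF.
by rewrite jn andbT (leq_trans jn his) nth_take // (leq_trans jn his).
Qed.

Lemma sub_in_count (T : eqType) (a1 a2 : pred T) (s : seq T) :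
  {in s, forall x, a1 x -> a2 x} -> count a1 s <= count a2 s.
Proof.
elim: s => //= y s IH H.
have H1 : {in s, forall x, a1 x -> a2 x} by move=> x xs; apply: H; rewrite inE xs orbT.
apply: leq_add; last exact: IH.
case Ay: (a1 y) => //=. by rewrite (H y (mem_head _ _) Ay).
Qed.

Lemma count_predU_le (T : Type) (a b : pred T) s :
  count (predU a b) s <= count a s + count b s.
Proof.
elim: s => //= y s IH.
rewrite addnACA; apply: leq_add => //.
by case: (a y); case: (b y).
Qed.

Lemma filter_split (T : eqType) (a : pred T) t p' v q' :
  filter a t = p' ++ v :: q' -> exists p q, t = p ++ v :: q /\ filter a p = p'.
Proof.
elim: t p' => [|x t IH] p' /=; first by case: p'.
case ax: (a x).
  case: p' => [|y p'] /= [exy E].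
    by exists [::], t; rewrite exy.
  have [p [q [Et Ef]]] := IH _ E.
  by exists (x :: p), q; rewrite Et /= ax Ef exy.
move=> E; have [p [q [Et Ef]]] := IH _ E.
by exists (x :: p), q; rewrite Et /= ax Ef.
Qed.

Section Gen.
Variables (T : finType) (e : rel T).

Lemma DNS_prefix (A : {set T}) (s : seq T) : is_DNS_in e A s -> forall p v q, s = p ++ v :: q ->
  exists w, closedN_in e A v w && (count (fun u => closedN_in e A u w) p <= 1).
Proof.
case/and3P=> _ _ /forallP H p v q Es.
have hi : size p < size s by rewrite Es size_cat /= addnS ltnS leq_addr.
have /existsP [w /andP [H1 H2]] := H (Ordinal hi).
exists w.
rewrite (tnth_nth v) /= Es nth_cat ltnn subnn /= in H1.
rewrite H1 /=.
by rewrite (card_prefix s v (fun u => closedN_in e A u w)) /= Es take_size_cat in H2.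
Qed.

Lemma prefix_DNS (A : {set T}) (s : seq T) : uniq s -> all (fun v => v \in A) s ->
  (forall p v q, s = p ++ v :: q ->
  exists w, closedN_in e A v w && (count (fun u => closedN_in e A u w) p <= 1)) ->
  is_DNS_in e A s.
Proof.
move=> U Al H; rewrite /is_DNS_in U Al /=.
apply/forallP => i.
have x0 := tnth (in_tuple s) i.
have Es : s = take i s ++ nth x0 s i :: drop i.+1 s.
  by rewrite -drop_nth // cat_take_drop.
have [w /andP [H1 H2]] := H _ _ _ Es.
apply/existsP; exists w.
by rewrite (tnth_nth x0) H1 (card_prefix s x0 (fun u => closedN_in e A u w)).
Qed.

Lemma restrict_DNS (A : {set T}) (t : seq T) :
  is_DNS e t ->
  (forall p v q w, t = p ++ v :: q -> v \in A -> w \notin A -> e v w ->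
     count (fun u => closedN_in e [set: T] u w) p <= 1 ->
     exists w', closedN_in e A v w' &&
       (count (fun u => closedN_in e A u w') (filter (fun x => x \in A) p) <= 1)) ->
  #|[set v in t | v \in A]| <= gr2_in e A.
Proof.
move=> Ht Hsw.
set s' := filter (fun x => x \in A) t.
have Ut : uniq t by case/and3P: Ht.
have Us' : uniq s' by rewrite filter_uniq.
have Hs' : is_DNS_in e A s'.
  apply: prefix_DNS => //; first by apply/allP => x; rewrite mem_filter => /andP[].
  move=> p' v q' E.
  have [p [q [Et Ef]]] := filter_split E.
  have vA : v \in A.
    have : v \in s' by rewrite E mem_cat mem_head orbT.
    by rewrite mem_filter => /andP[].
  have [w /andP [H1 H2]] := DNS_prefix Ht Et.
  case wA: (w \in A).
    exists w; rewrite /closedN_in wA /=.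
    rewrite /closedN_in in_setT /= in H1; rewrite H1 /=.
    rewrite -Ef count_filter.
    apply: leq_trans H2; apply: sub_count => u /=.
    by rewrite /closedN_in in_setT /= => /andP[].
  have evw : e v w.
    move: H1; rewrite /closedN_in in_setT /=; case/orP=> // /eqP ew.
    by rewrite ew vA in wA.
  rewrite -Ef; apply: (Hsw p v q w) => //; by rewrite wA.
have -> : #|[set v in t | v \in A]| = size s'.
  rewrite -(card_uniqP Us'); apply: eq_card => x.
  by rewrite in_set mem_filter andbC.
have hlt : size s' < #|T|.+1.
  by rewrite ltnS -(card_uniqP Us') max_card.
rewrite /gr2_in.
apply: (@leq_bigmax_cond _ (fun n : 'I_#|T|.+1 => [exists t0 : n.-tuple T, is_DNS_in e A t0])
  (fun n => nat_of_ord n) (Ordinal hlt)).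
by apply/existsP; exists (in_tuple s').
Qed.
End Gen.

Lemma count_pred1_uniq (T : eqType) (s : seq T) x : uniq s -> count (pred1 x) s <= 1.
Proof. by move=> U; rewrite count_uniq_mem // leq_b1. Qed.

Lemma count_excl (T : eqType) (a : pred T) s x : x \in s -> a x -> count a s <= 1 ->
  count (fun u => a u && (u != x)) s = 0.
Proof.
move=> xs ax.
have E : count a s = count (fun u => a u && (u != x)) s + count (fun u => a u && (u == x)) s.
  elim: s {xs} => //= y s ->.
  case: (a y); case: (y == x) => /=; rewrite ?add0n ?addn0 ?add1n ?addSn ?addnS //.
have : 0 < count (fun u => a u && (u == x)) s.
  rewrite -has_count; apply/hasP; exists x => //; by rewrite ax eqxx.
rewrite E; move: (count (fun u => a u && (u != x)) s) (count (fun u => a u && (u == x)) s).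
move=> [|n] [|m] //; by rewrite addnS addSn.
Qed.

Theorem lemma6 (T : finType) (e : rel T) (r : nat) (s c : 'I_r -> T)
  (t : seq T) :
  symmetric e -> irreflexive e ->
  ((thin_spider e s c /\ 2 <= r) \/ (thick_spider e s c /\ 3 <= r)) ->
  is_MDNS e t ->
  #|[set v in t | v \in spiderH s c]| <= gr2_in e (spiderH s c) /\
  #|[set v in t | v \in spiderC c :|: spiderS s]|
    <= gr2_in e (spiderC c :|: spiderS s).
Proof.
move=> sym _ Hsp [Ht _].
have [Hs r2] : is_spider e s c /\ 1 < r.
  by case: Hsp => [[[H _] r2]|[[H _] r3]]; split => //; apply: ltnW.
have [sinj [cinj [sc [ss [cc [ch sh]]]]]] := Hs.
split.
  apply: restrict_DNS => // p v q w Et vH wnH evw Hc.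
  rewrite /spiderH in_setC negbK in wnH.
  case/setUP: wnH => /imsetP [i _ ->] in evw Hc *.
    by move: (sh i v vH); rewrite sym evw.
  have HH : count (fun u => u \in spiderH s c) p <= 1.
    apply: leq_trans Hc; apply: sub_count => u uH.
    by rewrite /closedN_in in_setT sym ch // orbT.
  exists v; rewrite /closedN_in vH eqxx /=.
  apply: leq_trans (count_size _ _) _.
  by rewrite size_filter.
apply: restrict_DNS => // p v q w Et vA wnA evw Hc.
have wH : w \in spiderH s c by rewrite /spiderH in_setC setUC.
have Ut : uniq t by case/and3P: Ht.
have [vnp Up] : v \notin p /\ uniq p.
  move: Ut; rewrite Et cat_uniq => /and3P [Up /hasPn Hn _]; split => //.
  by apply: (Hn v); rewrite mem_head.
case/setUP: vA => /imsetP [j _ vj]; last first.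
  by move: (sh j w wH); rewrite -vj evw.
subst v.
have HC : count (fun u => u \in spiderC c) p <= 1.
  apply: leq_trans Hc; apply: sub_count => u /imsetP [k _ ->].
  by rewrite /closedN_in in_setT ch // orbT.
have sA : forall k, s k \in spiderC c :|: spiderS s.
  by move=> k; apply/setUP; right; apply: imset_f.
case: Hsp => [[[_ thin] _]|[[_ thick] _]].
  exists (s j); rewrite /closedN_in sA /= sym thin eqxx orbT /=.
  apply: leq_trans (sub_in_count (a2 := pred1 (s j)) _) _; last first.
    by apply: count_pred1_uniq; rewrite filter_uniq.
  move=> u; rewrite mem_filter => /andP [uA up].
  rewrite /= /closedN_in ?sA /=.
  case/setUP: uA => /imsetP [k _ ->] in up *.
    rewrite (negbTE (sc j k)) /= sym thin => /eqP jk.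
    by subst k; rewrite up in vnp.
  by rewrite (negbTE (ss k j)) orbF eq_sym.
have [k [kj Hk]] : exists k, k != j /\
    count (fun u => (u \in spiderC c) && (u != c k)) p = 0.
  case Hp: (has (fun u => u \in spiderC c) p).
    case/hasP: Hp => u up /imsetP [k _ uk].
    exists k; split.
      by apply/eqP => kj; subst; rewrite up in vnp.
    apply: count_excl => //; first by rewrite -uk.
    by apply: imset_f.
  have o0 : 0 < r by apply: ltnW.
  exists (if j == Ordinal o0 then Ordinal r2 else Ordinal o0); split.
    case E: (j == Ordinal o0); first by rewrite (eqP E). by rewrite eq_sym E.
  have C0 : count (fun u => u \in spiderC c) p = 0.
    by apply/eqP; rewrite -leqn0 leqNgt -has_count Hp.
  apply/eqP; rewrite -leqn0; apply: leq_trans (sub_count _ _) (eq_leq C0).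
  by move=> u /andP[].
exists (s k); rewrite /closedN_in sA /= sym thick kj orbT /=.
apply: leq_trans (sub_in_count (a2 := predU (pred1 (s k))
   (fun u => (u \in spiderC c) && (u != c k))) _) _.
  move=> u; rewrite mem_filter => /andP [uA up].
  rewrite /= /closedN_in ?sA /=.
  case/setUP: uA => /imsetP [m _ ->] in up *.
    rewrite (negbTE (sc k m)) /= sym thick => km.
    apply/orP; right; apply/andP; split; first by apply: imset_f.
    by rewrite (inj_eq cinj) eq_sym.
  by rewrite (negbTE (ss m k)) orbF eq_sym => ->.
apply: leq_trans (count_predU_le _ _ _) _.
rewrite -(addn0 1); apply: leq_add.
  by apply: count_pred1_uniq; rewrite filter_uniq.
rewrite -Hk count_filter; apply: sub_count => u /andP[].
by move=> ->.
Qed.
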